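(* Every yes-instance of Unweighted Borda Manipulation under single-peaked elections has a solution in which every manipulator places the distinguished candidate $p$ in his/her highest position (i.e., $\pi(p)=|\mathcal{C}|+1$ for every manipulator's vote $\pi$).
   Context: Borda elections: candidates $\mathcal{C}\cup\{p\}$ ($p\notin\mathcal{C}$); each vote is a bijection $\pi:\mathcal{C}\cup\{p\}\to\{1,\dots,|\mathcal{C}|+1\}$, giving candidate $c$ score $\pi(c)-1$; total score is the sum over all votes; $p$ wins iff its total score is strictly higher than that of every other candidate. Given a bijection $\mathcal{L}:\mathcal{C}\cup\{p\}\to\{1,\dots,|\mathcal{C}|+1\}$, a vote $\pi$ is coincident with $\mathcal{L}$ if for any three distinct candidates $a,b,c$ with $\mathcal{L}(a)<\mathcal{L}(b)<\mathcal{L}(c)$ or $\mathcal{L}(c)<\mathcal{L}(b)<\mathcal{L}(a)$, $\pi(c)>\pi(b)$ implies $\pi(b)>\pi(a)$. An election is single-peaked if there exists such an $\mathcal{L}$ (a harmonious order) with which all votes are coincident. UBM under single-peaked elections: input is a single-peaked election with candidates $\mathcal{C}\cup\{p\}$ and votes $\Pi_{\mathcal{V}}$ in which $p$ is not the winner, a harmonious order $\mathcal{L}$, and a set $\mathcal{V}'$ of manipulators. A solution is a multiset of votes $\Pi_{\mathcal{V}'}$, one per manipulator, each coincident with $\mathcal{L}$, such that $p$ has strictly higher total score than every candidate of $\mathcal{C}$ with respect to $\Pi_{\mathcal{V}}\uplus\Pi_{\mathcal{V}'}$. *)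

(* Defs.v *)
From mathcomp Require Import all_boot.
Set Implicit Arguments. Unset Strict Implicit. Unset Printing Implicit Defensive.

(* Candidates: a finite type T = C ∪ {p}, with the distinguished p : T.
   A vote is a bijection T -> {1..|T|}; we store it 0-based as a
   function T -> 'I_#|T| (value = pi(c) - 1 = score of c), required
   to be injective (hence bijective, domain and codomain have equal size). *)
Definition vote (T : finType) := {ffun T -> 'I_#|T|}.

Definition is_vote (T : finType) (v : vote T) : bool := injectiveb v.

Definition vscore (T : finType) (v : vote T) (c : T) : nat := nat_of_ord (v c).

Definition total_score (T : finType) (votes : seq (vote T)) (c : T) : nat :=
  \sum_(v <- votes) vscore v c.

Definition coincident (T : finType) (L v : vote T) : Prop :=
  forall a b c : T, a != b -> b != c -> a != c ->
    ((L a < L b < L c)%N || (L c < L b < L a)%N) ->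
    (v c > v b)%N -> (v b > v a)%N.

Definition winner (T : finType) (votes : seq (vote T)) (p : T) : Prop :=
  forall c : T, c != p -> (total_score votes c < total_score votes p)%N.

Definition ubm_solution (T : finType) (p : T) (L : vote T)
    (votesV : seq (vote T)) (k : nat) (sol : seq (vote T)) : Prop :=
  [/\ size sol = k,
      forall v, v \in sol -> is_vote v /\ coincident L v
    & winner (votesV ++ sol) p].

(* Main.v *)
Require Import Defs.
From mathcomp Require Import all_boot.
From mathcomp Require Import zify.
Set Implicit Arguments. Unset Strict Implicit.

Definition dist (T : finType) (L : vote T) (p c : T) : nat :=
  (L c - L p) + (L p - L c).
Definition Fv (T : finType) (L v : vote T) (p c : T) : nat :=
  if (v c < v p)%N then nat_of_ord (v c) else #|T|.-1 - dist L p c.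
Definition newv (T : finType) (L : vote T) (p : T) (v : vote T) : vote T :=
  [ffun c => insubd (v c) (Fv L v p c)].

Lemma newvE (T : finType) (L : vote T) (p : T) (v : vote T) c :
  nat_of_ord (newv L p v c) = Fv L v p c.
Proof.
rewrite /newv ffunE.
have -> : nat_of_ord (insubd (v c) (Fv L v p c)) = val (insubd (v c) (Fv L v p c)) by [].
rewrite val_insubd.
have H : Fv L v p c < #|T|.
  rewrite /Fv; case: ifP => _; first exact: ltn_ord.
  have := ltn_ord (v c); lia.
by rewrite H.
Qed.

Section S.
Variables (T : finType) (L v : vote T) (p : T).
Hypothesis HLi : injective L.
Hypothesis Hvi : injective v.
Hypothesis Hco : coincident L v.

Lemma between_up c b :
  (v p <= v c)%N ->
  (minn (L p) (L c) <= L b <= maxn (L p) (L c))%N -> (v p <= v b)%N.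
Proof.
move=> Hc Hb.
have [->|nbp] := eqVneq b p; first by [].
have [->|nbc] := eqVneq b c; first by [].
have [ecp|ncp] := eqVneq c p.
  subst c. have : nat_of_ord (L b) = L p by lia.
  move=> /val_inj /HLi E; by rewrite E eqxx in nbp.
have Lbp : nat_of_ord (L b) <> L p by move=> /val_inj /HLi E; rewrite E eqxx in nbp.
have Lbc : nat_of_ord (L b) <> L c by move=> /val_inj /HLi E; rewrite E eqxx in nbc.
have vcp : nat_of_ord (v c) <> v p by move=> /val_inj /Hvi E; rewrite E eqxx in ncp.
rewrite leqNgt; apply/negP => Hlt.
have := Hco (a:=p) (b:=b) (c:=c).
rewrite eq_sym nbp nbc eq_sym ncp.
have -> : ((L p < L b < L c) || (L c < L b < L p))%N by lia.
have -> : (v b < v c)%N by lia.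
move=> /(_ isT isT isT isT isT). lia.
Qed.

Lemma side x y : (v p <= v x)%N -> (v p <= v y)%N -> ~~ (L x < L p < L y)%N.
Proof.
move=> Hx Hy; apply/negP => H.
have nxp : x != p by apply/eqP => E; subst x; lia.
have nyp : y != p by apply/eqP => E; subst y; lia.
have nxy : x != y by apply/eqP => E; subst y; lia.
have vyp : nat_of_ord (v y) <> v p by move=> /val_inj /Hvi E; rewrite E eqxx in nyp.
have := Hco (a:=x) (b:=p) (c:=y).
rewrite nxp eq_sym nyp nxy H /=.
have -> : (v p < v y)%N by lia.
move=> /(_ isT isT isT isT isT). by rewrite ltnNge Hx.
Qed.

Lemma bound c : (v p <= v c)%N -> (dist L p c + v p < #|T|)%N.
Proof.
move=> Hc.
pose Ul := [seq b <- enum T | (v p <= v b)%N].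
have uUl : uniq Ul by rewrite filter_uniq // enum_uniq.
have H1 : (size (map (fun b => nat_of_ord (v b)) Ul) <= size (iota (v p) (#|T| - v p)))%N.
  apply: uniq_leq_size.
    rewrite map_inj_uniq // => x y /val_inj; exact: Hvi.
  move=> i /mapP [b]; rewrite mem_filter => /andP [Hb _] ->.
  rewrite mem_iota; have := ltn_ord (v b); lia.
have H2 : (size (iota (minn (L p) (L c)) (dist L p c).+1) <= size (map (fun b => nat_of_ord (L b)) Ul))%N.
  apply: uniq_leq_size; first exact: iota_uniq.
  move=> i; rewrite mem_iota => Hi.
  have Hin : (i < #|T|)%N.
    have := ltn_ord (L p); have := ltn_ord (L c); rewrite /dist in Hi; lia.
  have := inj_card_onto HLi (eq_leq (card_ord _)) (Ordinal Hin).
  move=> /codomP [b Eb].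
  have Eb' : i = L b by rewrite -Eb.
  apply/mapP; exists b => //.
  rewrite mem_filter mem_enum andbT.
  apply: (between_up Hc). rewrite -Eb'. rewrite /dist in Hi. lia.
move: H1 H2; rewrite !size_map size_iota size_iota.
have := ltn_ord (v p). lia.
Qed.

Lemma newv_vote : is_vote (newv L p v).
Proof.
apply/injectiveP => c1 c2 E.
have E' : Fv L v p c1 = Fv L v p c2 by rewrite -!newvE E.
move: E'; rewrite /Fv.
have d1 := ltn_ord (v c1). have d2 := ltn_ord (v c2).
case: ifP => h1; case: ifP => h2.
- by move=> /val_inj /Hvi.
- have := bound (c:=c2); lia.
- have := bound (c:=c1); lia.
- have b1 := bound (c:=c1). have b2 := bound (c:=c2).
  have s1 := side (x:=c1) (y:=c2). have s2 := side (x:=c2) (y:=c1).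
  rewrite /dist in b1 b2 * => Hd.
  have : nat_of_ord (L c1) = L c2 by lia.
  by move=> /val_inj /HLi.
Qed.

Lemma newv_coinc : coincident L (newv L p v).
Proof.
move=> a b c nab nbc nac Hbet.
rewrite !newvE /Fv.
have da := ltn_ord (v a). have db := ltn_ord (v b). have dc := ltn_ord (v c).
case: (ifP) => hb.
- have Hcb : (v b < v c)%N -> (v a < v b)%N.
    apply: Hco => //.
  case: ifP => hc; case: ifP => ha; lia.
- have bb := bound (c:=b).
  case: ifP => hc.
    case: ifP => ha; lia.
  have bc := bound (c:=c).
  case: ifP => ha; first lia.
  have ba := bound (c:=a).
  have := side (x:=a) (y:=b); have := side (x:=b) (y:=a).
  have := side (x:=a) (y:=c); have := side (x:=c) (y:=a).
  have := side (x:=b) (y:=c); have := side (x:=c) (y:=b).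
  rewrite /dist in ba bb bc *. lia.
Qed.

End S.

Lemma sum_ineq (T : finType) (L : vote T) (p : T) (sol : seq (vote T)) c :
  (\sum_(v <- sol) vscore (newv L p v) c + \sum_(v <- sol) vscore v p <=
   \sum_(v <- sol) vscore v c + \sum_(v <- sol) vscore (newv L p v) p)%N.
Proof.
rewrite -!big_split /=. apply: leq_sum => v _.
rewrite /vscore !newvE /Fv ltnn /dist.
have := ltn_ord (v p); have := ltn_ord (v c).
case: ifP; lia.
Qed.

Theorem mainTheorem6 (T : finType) (p : T) (L : vote T)
    (votesV : seq (vote T)) (k : nat) :
  is_vote L ->
  (forall v, v \in votesV -> is_vote v /\ coincident L v) ->
  ~ winner votesV p ->
  (exists sol, ubm_solution p L votesV k sol) ->
  exists sol, ubm_solution p L votesV k sol /\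
    (forall v, v \in sol -> (vscore v p).+1 = #|T|).
Proof.
move=> HL HV _ [sol [Hsz Hsol Hwin]].
have HLi : injective L by apply/injectiveP.
exists (map (newv L p) sol); split; first split.
- by rewrite size_map.
- move=> v' /mapP [v Hv ->].
  have [iv cv] := Hsol v Hv.
  have Hvi : injective v by apply/injectiveP.
  split; [exact: newv_vote | exact: newv_coinc].
- move=> c Hc. have := Hwin c Hc.
  rewrite /total_score !big_cat /= !big_map.
  have := sum_ineq L p sol c. lia.
- move=> v' /mapP [v _ ->].
  rewrite /vscore newvE /Fv ltnn /dist.
  have := ltn_ord (v p). lia.
Qed.
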